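(* Let $n=2$, $d\ge3$, and let $P_1,P_2$ be real quadratic forms on $\mathbb{R}^d$ such that for all linearly independent $\vec w_1,\dots,\vec w_{d-2}\in\mathbb{R}^d$, $\det[\nabla P_1(t);\nabla P_2(t);\vec w_1;\dots;\vec w_{d-2}]\not\equiv0$ as a polynomial in $t$. Let $V\subset\mathbb{R}^{d+2}$ be a nontrivial proper linear subspace. (1) If $1\le\dim V\le d-1$, then $\{t:\dim(\pi_t(V))<\dim V\}$ is contained in the zero set of a nonzero polynomial of degree at most $2$. (2) If $d\le\dim V\le d+1$, then $\{t:\dim(\pi_t(V))<\dim V-1\}$ is contained in the zero set of a nonzero polynomial of degree at most $2$.
   Context: For $t\in\mathbb{R}^d$, $V(t)\subset\mathbb{R}^{d+2}$ is the linear subspace spanned by $(e_j,\partial_jP_1(t),\partial_jP_2(t))$, $j=1,\dots,d$, and $\pi_t$ is the orthogonal projection onto $V(t)$. *)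

(* Defs.v *)
(* Real numbers are modelled by an arbitrary real closed
   field R (rcfType). *)
From HB Require Import structures.
From mathcomp Require Import all_boot all_order all_algebra.
Set Implicit Arguments. Unset Strict Implicit. Unset Printing Implicit Defensive.
Import Order.TTheory GRing.Theory Num.Theory.
Local Open Scope ring_scope.

Section Defs.
Variable R : rcfType.

Definition qform {d} (A : 'M[R]_d) (t : 'rV[R]_d) : R := (t *m A *m t^T) 0 0.

Definition qgrad {d} (A : 'M[R]_d) (t : 'rV[R]_d) : 'rV[R]_d := t *m (A + A^T).

(* Matrix whose j-th row is (e_j, d_j P1(t), d_j P2(t)) in R^{d+2};
   its row space is V(t). *)
Definition Vt_mx {d} (A1 A2 : 'M[R]_d) (t : 'rV[R]_d) : 'M[R]_(d, d + 2) :=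
  row_mx 1%:M (row_mx (qgrad A1 t)^T (qgrad A2 t)^T).

(* Orthogonal projection (acting on row vectors, x |-> x *m P) onto the row
   space of a matrix B with linearly independent rows: B^T (B B^T)^{-1} B. *)
Definition orth_proj_mx {m n} (B : 'M[R]_(m, n)) : 'M[R]_n :=
  B^T *m invmx (B *m B^T) *m B.

(* dim pi_t(V), for V the row space of the matrix V. *)
Definition proj_dim {d} (A1 A2 : 'M[R]_d) (t : 'rV[R]_d) (V : 'M[R]_(d + 2)) : nat :=
  \rank (V *m orth_proj_mx (Vt_mx A1 A2 t)).

Definition stack_mx {d} (g1 g2 : 'rV[R]_d) (W : 'M[R]_(d - 2, d)) : 'M[R]_d :=
  \matrix_(i < d, j < d)
    if (i : nat) == 0%N then g1 0 j
    else if (i : nat) == 1%N then g2 0 j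
    else if insub (i - 2)%N is Some k then W k j else 0.

(* A polynomial of degree at most 2 in t in R^d, with coefficients (M, b, c),
   M symmetric: Q(t) = t M t^T + b t^T + c. *)
Definition deg2_eval {d} (M : 'M[R]_d) (b : 'rV[R]_d) (c : R) (t : 'rV[R]_d) : R :=
  (t *m M *m t^T) 0 0 + (b *m t^T) 0 0 + c.

Definition in_deg2_zero_set {d} (S : 'rV[R]_d -> Prop) : Prop :=
  exists (M : 'M[R]_d) (b : 'rV[R]_d) (c : R),
    M^T = M /\ ~ (M = 0 /\ b = 0 /\ c = 0) /\
    forall t, S t -> deg2_eval M b c t = 0.

End Defs.

(* Main.v *)
Require Import Defs.
From HB Require Import structures.
From mathcomp Require Import all_boot all_order all_algebra ring zify.
Set Implicit Arguments. Unset Strict Implicit. Unset Printing Implicit Defensive.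
Import Order.TTheory GRing.Theory Num.Theory.
Local Open Scope ring_scope.

Section Main.
Variables (R : rcfType) (d : nat) (A1 A2 : 'M[R]_d).

Lemma det2 (A : 'M[R]_2) : \det A = A 0 0 * A 1 1 - A 0 1 * A 1 0.
Proof.
rewrite (expand_det_row _ 0) !big_ord_recl big_ord0 addr0 /cofactor.
rewrite !det_mx11 /= !mxE /=.
have e1 : lift (0 : 'I_2) (0 : 'I_1) = 1 by apply/val_inj.
have e2 : lift (1 : 'I_2) (0 : 'I_1) = 0 by apply/val_inj.
have e3 : (ord0 : 'I_2) = 0 by apply/val_inj.
rewrite e3 e1 /bump /= e2; rewrite !expr0 expr1; ring.
Qed.

Definition Gm (t : 'rV[R]_d) : 'M[R]_(2, d) := col_mx (qgrad A1 t) (qgrad A2 t).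
Definition Em (t : 'rV[R]_d) : 'M[R]_(2, d + 2) := row_mx (- Gm t) 1%:M.
Definition Sm (i : 'I_2) : 'M[R]_d := if i == 0 then A1 + A1^T else A2 + A2^T.
Definition dot (t u : 'rV[R]_d) : R := (t *m u^T) 0 0.
Definition qv (M : 'M[R]_d) (t : 'rV[R]_d) : R := (t *m M *m t^T) 0 0.

Lemma Bdef t : Vt_mx A1 A2 t = row_mx 1%:M (Gm t)^T.
Proof. by rewrite /Vt_mx /Gm -tr_col_mx. Qed.

Lemma BT t : (Vt_mx A1 A2 t)^T = col_mx 1%:M (Gm t).
Proof. by rewrite Bdef tr_row_mx trmxK trmx1. Qed.

Lemma L1 m (X : 'M[R]_(m, d + 2)) t :
  X *m (Vt_mx A1 A2 t)^T = 0 -> X = rsubmx X *m Em t.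
Proof.
rewrite BT -{1}[X]hsubmxK mul_row_col mulmx1 => /eqP; rewrite addr_eq0 => /eqP hl.
by rewrite mul_mx_row mulmx1 mulmxN -hl hsubmxK.
Qed.


Lemma sqnorm_ge0 n (u : 'rV[R]_n) : 0 <= (u *m u^T) 0 0.
Proof. rewrite mxE; apply: sumr_ge0 => i _; by rewrite mxE -expr2 sqr_ge0. Qed.

Lemma sqnorm_eq0 n (u : 'rV[R]_n) : (u *m u^T) 0 0 = 0 -> u = 0.
Proof.
rewrite mxE => /eqP; rewrite psumr_eq0 => [/allP h|i _]; last by rewrite mxE -expr2 sqr_ge0.
apply/rowP => k; rewrite mxE; have := h k (mem_index_enum _).
by rewrite mxE -expr2 sqrf_eq0 => /eqP ->.
Qed.

Lemma BB_unit t : (Vt_mx A1 A2 t *m (Vt_mx A1 A2 t)^T) \in unitmx.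
Proof.
rewrite BT Bdef mul_row_col mulmx1 unitmxE unitfE; apply/negP => /det0P [v nv].
rewrite mulmxDr mulmx1 => h.
have := congr1 (fun M : 'M[R]_(1,1) => M 0 0) (congr1 (mulmx^~ v^T) h).
rewrite /= mul0mx mulmxDl mxE.
have -> : v *m ((Gm t)^T *m Gm t) *m v^T = (v *m (Gm t)^T) *m (v *m (Gm t)^T)^T.
  by rewrite trmx_mul trmxK !mulmxA.
rewrite [X in _ = X]mxE => /eqP; rewrite paddr_eq0 ?sqnorm_ge0 // => /andP [/eqP /sqnorm_eq0 v0 _].
by rewrite v0 eqxx in nv.
Qed.

Lemma B_free t : row_free (Vt_mx A1 A2 t).
Proof.
rewrite /row_free eqn_leq rank_leq_row /=.
by have := mxrankM_maxl (Vt_mx A1 A2 t) (Vt_mx A1 A2 t)^T; rewrite mxrank_unit ?BB_unit.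
Qed.

Lemma L3 m (X : 'M[R]_(m, d + 2)) t :
  X *m orth_proj_mx (Vt_mx A1 A2 t) = 0 -> X *m (Vt_mx A1 A2 t)^T = 0.
Proof.
rewrite /orth_proj_mx !mulmxA => h.
have h2 : X *m (Vt_mx A1 A2 t)^T *m invmx (Vt_mx A1 A2 t *m (Vt_mx A1 A2 t)^T) = 0.
  by apply: (row_free_inj (B_free t)); rewrite /= h mul0mx.
by rewrite -(mulmxKV (BB_unit t) (X *m _)) h2 mul0mx.
Qed.

Lemma rankK p t (V : 'M[R]_(d + 2)) (W : 'M[R]_(p, d + 2)) : V *m W^T = 0 ->
  (\rank (V :&: kermx (orth_proj_mx (Vt_mx A1 A2 t))) <= 2 - \rank (Em t *m W^T))%N.
Proof.
move=> hVW; set K := (V :&: _)%MS.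
have hK : K *m (Vt_mx A1 A2 t)^T = 0 by apply: L3; apply/sub_kermxP; exact: capmxSr.
have hKE := L1 hK.
have : (rsubmx K <= kermx (Em t *m W^T))%MS.
  apply/sub_kermxP; rewrite mulmxA -hKE.
  have /submxP [D ->] : (K <= V)%MS by exact: capmxSl.
  by rewrite -mulmxA hVW mulmx0.
move/mxrankS; rewrite mxrank_ker; apply: leq_trans.
by rewrite [X in (\rank X <= _)%N]hKE mxrankM_maxl.
Qed.


Lemma Gentry t i k : Gm t i k = (t *m Sm i) 0 k.
Proof.
rewrite /Gm mxE; case: splitP => j hj.
  have -> : i = 0 by apply/val_inj; rewrite /= hj; case: j {hj} => [[]].
  by rewrite /Sm eqxx ord1.
have -> : i = 1 by apply/val_inj; rewrite /= hj; case: j {hj} => [[]].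
by rewrite /Sm /= ord1.
Qed.

Lemma entry_prod m n p (A : 'M[R]_(m,n)) (B : 'M[R]_(n,p)) i j :
  (A *m B) i j = (row i A *m col j B) 0 0.
Proof. by rewrite !mxE; apply: eq_bigr => k _; rewrite !mxE. Qed.

Lemma GY p t (Y : 'M[R]_(p,d)) i j :
  (Gm t *m Y^T) i j = dot t (row j Y *m (Sm i)^T).
Proof.
rewrite entry_prod /dot trmx_mul trmxK mulmxA.
have -> : row i (Gm t) = t *m Sm i by apply/rowP => k; rewrite mxE Gentry.
by rewrite tr_row.
Qed.

Lemma Eentry p t (Y : 'M[R]_(p,d)) (Z : 'M[R]_(p,2)) i j :
  (Em t *m (row_mx Y Z)^T) i j = Z j i - (Gm t *m Y^T) i j.
Proof. by rewrite /Em tr_row_mx mul_row_col mulNmx mul1mx !mxE addrC. Qed.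

Lemma qvD M1 M2 t : qv (M1 + M2) t = qv M1 t + qv M2 t.
Proof. by rewrite /qv mulmxDr mulmxDl mxE. Qed.
Lemma qvN M t : qv (- M) t = - qv M t.
Proof. by rewrite /qv mulmxN mulNmx mxE. Qed.
Lemma qvZ a M t : qv (a *: M) t = a * qv M t.
Proof. by rewrite /qv -scalemxAr -scalemxAl mxE. Qed.
Lemma qvT M t : qv M^T t = qv M t.
Proof.
rewrite /qv; have -> : t *m M^T *m t^T = (t *m M *m t^T)^T by rewrite !trmx_mul trmxK mulmxA.
by rewrite mxE.
Qed.
Lemma dotD t u v : dot t (u + v) = dot t u + dot t v.
Proof. by rewrite /dot linearD /= mulmxDr mxE. Qed.
Lemma dotN t u : dot t (- u) = - dot t u.
Proof. by rewrite /dot linearN /= mulmxN mxE. Qed.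
Lemma dotZ t a u : dot t (a *: u) = a * dot t u.
Proof. by rewrite /dot linearZ /= -scalemxAr mxE. Qed.
Lemma qv_outer u v t : qv (u^T *m v) t = dot t u * dot t v.
Proof.
rewrite /qv /dot mulmxA -mulmxA [LHS]mxE big_ord1.
have -> : v *m t^T = (t *m v^T)^T by rewrite trmx_mul trmxK.
by rewrite [X in _ * X]mxE.
Qed.

Lemma deg2E M b c t : deg2_eval M b c t = qv M t + dot t b + c.
Proof.
rewrite /deg2_eval /qv /dot; have -> : b *m t^T = (t *m b^T)^T by rewrite trmx_mul trmxK.
by rewrite [X in _ + X + _ = _]mxE.
Qed.


Lemma gen_sub k n m (U : 'M[R]_(m, n)) : (k <= \rank U)%N ->
  exists W : 'M[R]_(k, n), row_free W /\ (W <= U)%MS.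
Proof.
move=> hk; exists (pid_mx k *m row_base U); split.
  rewrite /row_free mxrankMfree ?row_base_free // rank_pid_mx //.
by rewrite (submx_trans (submxMl _ _)) // eq_row_base.
Qed.

Lemma stack_ker (g1 g2 z : 'rV[R]_d) (W : 'M[R]_(d - 2, d)) :
  g1 *m z^T = 0 -> g2 *m z^T = 0 -> z *m W^T = 0 ->
  z *m (stack_mx g1 g2 W)^T = 0.
Proof.
move=> g1z g2z hzW; apply/rowP => j; rewrite !mxE.
under eq_bigr do rewrite !mxE.
case: eqP => [j0|jn0].
  transitivity ((g1 *m z^T) 0 0); last by rewrite g1z mxE.
  by rewrite mxE; apply: eq_bigr => k _; rewrite mxE mulrC.
case: eqP => [j1|jn1].
  transitivity ((g2 *m z^T) 0 0); last by rewrite g2z mxE.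
  by rewrite mxE; apply: eq_bigr => k _; rewrite mxE mulrC.
case: insubP => [k _ _|_]; last by rewrite big1 // => i _; rewrite mulr0.
transitivity ((z *m W^T) 0 k); last by rewrite hzW mxE.
by rewrite mxE; apply: eq_bigr => i _; rewrite mxE.
Qed.

Lemma contra_stack
  (H : forall W : 'M[R]_(d - 2, d), row_free W ->
     exists t : 'rV[R]_d, \det (stack_mx (qgrad A1 t) (qgrad A2 t) W) != 0)
  p (Y : 'M[R]_(p, d)) : (p <= 2)%N ->
  (forall t, exists z : 'rV[R]_d, [/\ z != 0, (z <= Y)%MS & Gm t *m z^T = 0]) -> False.
Proof.
move=> hp hz.
have [W [fW sW]] : exists W : 'M[R]_(d - 2, d), row_free W /\ (W <= kermx Y^T)%MS.
  apply: gen_sub; rewrite mxrank_ker mxrank_tr; have := rank_leq_row Y; lia.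
have [t ht] := H W fW.
have [z [nz zY hGz]] := hz t.
have hWY : W *m Y^T = 0 by apply/sub_kermxP.
have hzW : z *m W^T = 0.
  case/submxP: zY => D ->.
  by rewrite -mulmxA -[Y in _ *m (Y *m _)](trmxK Y) -trmx_mul hWY trmx0 mulmx0.
move: hGz; rewrite /Gm.
change (col_mx (qgrad A1 t) (qgrad A2 t) *m z^T = 0 -> False).
rewrite mul_col_mx -col_mx0 => /eq_col_mx [g1z g2z].
have hs := stack_ker g1z g2z hzW.
have : \det (stack_mx (qgrad A1 t) (qgrad A2 t) W)^T == 0 by apply/det0P; exists z.
by rewrite det_tr (negbTE ht).
Qed.


Lemma ord2P (i : 'I_2) : i = 0 \/ i = 1.
Proof. by case: i => [[|[|n]] hi]; [left; apply: val_inj | right; apply: val_inj | ]. Qed.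

Definition uu p (Y : 'M[R]_(p, d)) (i : 'I_2) (j : 'I_p) : 'rV[R]_d := row j Y *m (Sm i)^T.

Lemma qv_sym M t : qv (2^-1 *: (M + M^T)) t = qv M t.
Proof.
rewrite qvZ qvD qvT -mulr2n -[qv M t *+ 2]mulr_natl mulrA mulVf ?mul1r //.
by rewrite pnatr_eq0.
Qed.

Lemma qv0 t : qv 0 t = 0.
Proof. by rewrite /qv mulmx0 mul0mx mxE. Qed.

Lemma case1_poly
  (H : forall W : 'M[R]_(d - 2, d), row_free W ->
     exists t : 'rV[R]_d, \det (stack_mx (qgrad A1 t) (qgrad A2 t) W) != 0)
  (S : 'rV[R]_d -> Prop) (Y : 'M[R]_(2, d)) (Z : 'M[R]_2) :
  (row_free Y \/ (Y = 0 /\ Z = 1%:M)) ->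
  (forall t, S t -> \det (Em t *m (row_mx Y Z)^T) = 0) -> in_deg2_zero_set S.
Proof.
move=> hY hS.
pose Mq := (uu Y 0 0)^T *m uu Y 1 1 - (uu Y 0 1)^T *m uu Y 1 0.
pose b := - (Z 0 0 *: uu Y 1 1 + Z 1 1 *: uu Y 0 0) + (Z 1 0 *: uu Y 1 0 + Z 0 1 *: uu Y 0 1).
pose c := Z 0 0 * Z 1 1 - Z 1 0 * Z 0 1.
have key : forall t, \det (Em t *m (row_mx Y Z)^T) = deg2_eval (2^-1 *: (Mq + Mq^T)) b c t.
  move=> t; rewrite det2 !Eentry !GY deg2E qv_sym /Mq /b /c.
  rewrite qvD qvN !qv_outer !(dotD, dotN, dotZ) /uu; ring.
exists (2^-1 *: (Mq + Mq^T)), b, c; split; last split.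
- by rewrite linearZ /= linearD /= trmxK addrC.
- case: hY => [fY [hM _]|[Y0 Z1] [_ [_ hc]]]; last first.
    by move: hc; rewrite /c Z1 !mxE /= ; rewrite mulr1 mulr0 subr0 => /eqP; rewrite oner_eq0.
  apply: (contra_stack H (Y := Y)) => // t.
  have hq : qv Mq t = 0 by rewrite -qv_sym hM qv0.
  have hd : \det (Y *m (Gm t)^T) == 0.
    rewrite -det_tr trmx_mul trmxK det2 !GY; apply/eqP; rewrite -hq /Mq.
    by rewrite qvD qvN !qv_outer /uu.
  case/det0P: hd => v nv hv.
  exists (v *m Y); split.
  + by rewrite mulmx_free_eq0.
  + exact: submxMl.
  + by rewrite -[Gm t](trmxK) -trmx_mul -mulmxA hv trmx0.
- by move=> t /hS; rewrite key.
Qed.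


Lemma rowrV n (z : 'rV[R]_n) j : row j z = z.
Proof. by apply/rowP => k; rewrite mxE ord1. Qed.

Lemma sq_eq0 (x y : R) : x * x + y * y = 0 -> x = 0 /\ y = 0.
Proof.
move/eqP; rewrite -!expr2 paddr_eq0 ?sqr_ge0 // => /andP [].
by rewrite !sqrf_eq0 => /eqP -> /eqP ->.
Qed.

Lemma case2_poly
  (H : forall W : 'M[R]_(d - 2, d), row_free W ->
     exists t : 'rV[R]_d, \det (stack_mx (qgrad A1 t) (qgrad A2 t) W) != 0)
  (S : 'rV[R]_d -> Prop) (Y : 'rV[R]_d) (Z : 'rV[R]_2) :
  row_mx Y Z != 0 ->
  (forall t, S t -> Em t *m (row_mx Y Z)^T = 0) -> in_deg2_zero_set S.
Proof.
move=> hw hS.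
pose Mq := (uu Y 0 0)^T *m uu Y 0 0 + (uu Y 1 0)^T *m uu Y 1 0.
pose b := - ((Z 0 0 + Z 0 0) *: uu Y 0 0 + (Z 0 1 + Z 0 1) *: uu Y 1 0).
pose c := Z 0 0 * Z 0 0 + Z 0 1 * Z 0 1.
have key : forall t, (Em t *m (row_mx Y Z)^T) 0 0 ^+ 2 + (Em t *m (row_mx Y Z)^T) 1 0 ^+ 2
    = deg2_eval Mq b c t.
  move=> t; rewrite !Eentry !GY deg2E /Mq /b /c.
  rewrite qvD !qv_outer !(dotD, dotN, dotZ) /uu; ring.
exists Mq, b, c; split; last split.
- by rewrite /Mq linearD /= (trmx_mul (uu Y 0 0)^T) (trmx_mul (uu Y 1 0)^T) !trmxK.
- move=> [hM [_ hc]].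
  have [z0 z1] := sq_eq0 hc.
  have hu : forall k, uu Y 0 0 0 k = 0 /\ uu Y 1 0 0 k = 0.
    move=> k; apply: sq_eq0.
    have := congr1 (fun M : 'M[R]_d => M k k) hM; rewrite /= !mxE !big_ord1 !mxE.
    by [].
  have hZ : Z = 0 by apply/rowP => i; rewrite mxE; case: (ord2P i) => ->.
  have hY : Y != 0 by apply: contraNneq hw => ->; rewrite hZ row_mx0.
  apply: (contra_stack H (Y := Y)) => // t.
  exists Y; split => //.
  apply/matrixP => i j; rewrite GY rowrV mxE.
  have -> : Y *m (Sm i)^T = 0.
    apply/rowP => k; rewrite [RHS]mxE.
    by case: (ord2P i) => ->; [move: (hu k).1 | move: (hu k).2]; rewrite /uu rowrV.
  by rewrite /dot trmx0 mulmx0 mxE.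
- move=> t /hS h0; rewrite -key h0 !mxE; ring.
Qed.


Lemma cond1 t (V : 'M[R]_(d + 2)) (Wm : 'M[R]_(2, d + 2)) : V *m Wm^T = 0 ->
  (proj_dim A1 A2 t V < \rank V)%N -> \det (Em t *m Wm^T) = 0.
Proof.
move=> hVW hlt; have h1 := rankK t hVW.
have h2 := mxrank_mul_ker V (orth_proj_mx (Vt_mx A1 A2 t)).
have h3 : (proj_dim A1 A2 t V + \rank (V :&: kermx (orth_proj_mx (Vt_mx A1 A2 t)))%MS)%N
   = \rank V := h2.
apply/eqP/negPn/negP => hdet.
have hu : Em t *m Wm^T \in unitmx by rewrite unitmxE unitfE.
move: h1; rewrite (mxrank_unit hu) => h.
have hK : \rank (V :&: kermx (orth_proj_mx (Vt_mx A1 A2 t)))%MS = 0%N.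
  by apply/eqP; rewrite -leqn0.
by move: hlt; rewrite -h3 hK addn0 ltnn.
Qed.

Lemma cond2 t (V : 'M[R]_(d + 2)) (w : 'M[R]_(1, d + 2)) : V *m w^T = 0 ->
  (proj_dim A1 A2 t V < \rank V - 1)%N -> Em t *m w^T = 0.
Proof.
move=> hVW hlt; have h1 := rankK t hVW.
have h2 := mxrank_mul_ker V (orth_proj_mx (Vt_mx A1 A2 t)).
have h3 : (proj_dim A1 A2 t V + \rank (V :&: kermx (orth_proj_mx (Vt_mx A1 A2 t)))%MS)%N
   = \rank V := h2.
apply/eqP; rewrite -mxrank_eq0; apply/eqP.
move: h1 h3 hlt.
generalize (\rank (V :&: kermx (orth_proj_mx (Vt_mx A1 A2 t)))%MS) => k.
generalize (proj_dim A1 A2 t V) => a.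
generalize (\rank (Em t *m w^T)) => m.
generalize (\rank V) => r.
lia.
Qed.

End Main.

Unset Implicit Arguments.
Set Strict Implicit.

Theorem mainTheorem17 (R : rcfType) (d : nat) (A1 A2 : 'M[R]_d) :
  (3 <= d)%N -> A1^T = A1 -> A2^T = A2 ->
  (forall W : 'M[R]_(d - 2, d), row_free W ->
     exists t : 'rV[R]_d, \det (stack_mx (qgrad A1 t) (qgrad A2 t) W) != 0) ->
  forall V : 'M[R]_(d + 2), (0 < \rank V < d + 2)%N ->
    ((1 <= \rank V <= d - 1)%N ->
       in_deg2_zero_set (fun t => (proj_dim A1 A2 t V < \rank V)%N)) /\
    ((d <= \rank V <= d + 1)%N ->
       in_deg2_zero_set (fun t => (proj_dim A1 A2 t V < \rank V - 1)%N)).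
Proof.
move=> hd _ _ H V /andP [hV0 hVn].
set C := kermx V^T.
have hC : forall (p : nat) (X : 'M[R]_(p, d + 2)), (X <= C)%MS -> V *m X^T = 0.
  by move=> p X /sub_kermxP hX; rewrite -[V]trmxK -trmx_mul hX trmx0.
have rC : \rank C = (d + 2 - \rank V)%N by rewrite mxrank_ker mxrank_tr.
split.
- move=> /andP [h1 h2].
  case: (leqP 2 (\rank (lsubmx C))) => hl.
  + have [Y0 [fY sY]] := gen_sub hl.
    case/submxP: sY => D hD.
    have hW : (D *m C <= C)%MS by exact: submxMl.
    apply: (case1_poly H (Y := lsubmx (D *m C)) (Z := rsubmx (D *m C))).
      by left; rewrite -mulmx_lsub -hD.
    by move=> t ht; rewrite hsubmxK; apply: cond1 ht; exact: hC.
  + pose Lp : 'M[R]_(d + 2, d) := col_mx 1%:M 0.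
    have hLp : forall p (X : 'M[R]_(p, d + 2)), X *m Lp = lsubmx X.
      by move=> p X; rewrite -{1}[X]hsubmxK mul_row_col mulmx1 mulmx0 addr0.
    set K2 := (C :&: kermx Lp)%MS.
    have rK2 := mxrank_mul_ker C Lp.
    have hl' : (\rank (C *m Lp) < 2)%N by rewrite hLp.
    pose Rz : 'M[R]_(2, d + 2) := row_mx 0 1%:M.
    have sK2 : (K2 <= Rz)%MS.
      have hK2 : lsubmx K2 = 0 by rewrite -hLp; apply/sub_kermxP; exact: capmxSr.
      apply/submxP; exists (rsubmx K2).
      by rewrite mul_mx_row mulmx0 mulmx1 -hK2 hsubmxK.
    have sRz : (Rz <= C)%MS.
      have [_ e] := mxrank_leqif_sup sK2.
      apply: (submx_trans _ (capmxSl C (kermx Lp))); rewrite -e.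
      rewrite eqn_leq mxrankS //=; have := rank_leq_row Rz; rewrite /K2; lia.
    apply: (case1_poly H (Y := 0) (Z := 1%:M)); first by right.
    by move=> t ht; apply: cond1 ht; exact: hC.
- move=> /andP [h1 h2].
  have [w [fw sw]] : exists w : 'M[R]_(1, d + 2), row_free w /\ (w <= C)%MS.
    apply: gen_sub; lia.
  apply: (case2_poly H (Y := lsubmx w) (Z := rsubmx w)).
    by rewrite hsubmxK; apply: contraTneq fw => ->; rewrite /row_free mxrank0.
  by move=> t ht; rewrite hsubmxK; apply: cond2 ht; exact: hC.
Qed.
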